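(* Let $\mathfrak{R}$ be a complete rewriting system on $\Sigma$ and let $w\in\Sigma^*$. Assume that $\mathrm{Allseq}(w)$ terminates. If there are no cyclical overlaps and no cyclical inclusions in $\mathrm{Allseq}(w)$, then $\mathrm{Allseq}(w)$ converges.
   Context: $\Sigma^*$ is the free monoid on $\Sigma$; a rewriting system is a set of rules $l\to r$ with $l,r\in\Sigma^*$, complete meaning terminating and confluent; $plq\to prq$ is one rewriting step. $u\simeq v$ means $u=ab$, $v=ba$ for some words $a,b$ (cyclic conjugates). $u\rightsquigarrow v$ means some cyclic conjugate $\tilde u$ of $u$ (possibly $u$) satisfies $\tilde u\to v$; $\rightsquigarrow^*$ is its reflexive–transitive closure. A word is cyclically irreducible if it and all its cyclic conjugates are irreducible. $\mathrm{Allseq}(w)$ is the set of all sequences of cyclical reductions $u_1\rightsquigarrow u_2\rightsquigarrow\cdots$ with $u_1$ a cyclic conjugate of $w$; it terminates if none of them is infinite, and converges if, up to $\simeq$, a unique cyclically irreducible word is reached in it. There is a cyclical overlap between two rules of $\mathfrak{R}$ if they have the form $xuy\to u'$ and $yvx\to v'$ with $u',v'$ words, $u,v,x,y$ non-empty words, and $u'v$, $v'u$ not cyclic conjugates. There is a cyclical inclusion between rules $l\to v$ and $l'\to v'$ if either $l'\simeq l$ and $v,v'$ are not cyclic conjugates, or $l'$ is a proper subword of a cyclic conjugate $\ell_1$ of $l$, written $\ell_1=ul'$ with $u$ non-empty, and $v$ and $uv'$ are not cyclic conjugates. ''No cyclical overlaps and no cyclical inclusions in $\mathrm{Allseq}(w)$''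 means that for no word $u$ occurring in a sequence of $\mathrm{Allseq}(w)$ are there rules $r_1,r_2$, each applicable to some cyclic conjugate of $u$, with a cyclical overlap or a cyclical inclusion between $r_1$ and $r_2$. *)

(* Defs.v *)
From mathcomp Require Import all_boot.
Set Implicit Arguments. Unset Strict Implicit. Unset Printing Implicit Defensive.

Section Rewriting.
Variable Sigma : Type.
Notation word := (seq Sigma).

Definition rsystem := word -> word -> Prop.

Variable R : rsystem.

Definition rstep (u v : word) : Prop :=
  exists p l r q, R l r /\ u = p ++ l ++ q /\ v = p ++ r ++ q.

Inductive rstar : word -> word -> Prop :=
| rstar_refl u : rstar u u
| rstar_step u v w : rstep u v -> rstar v w -> rstar u w.

Definition terminating : Prop :=
  ~ exists f : nat -> word, forall n, rstep (f n) (f n.+1).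

Definition confluent : Prop :=
  forall u v1 v2, rstar u v1 -> rstar u v2 ->
    exists z, rstar v1 z /\ rstar v2 z.

Definition complete : Prop := terminating /\ confluent.

Definition cyc_conj (u v : word) : Prop :=
  exists a b, u = a ++ b /\ v = b ++ a.

Definition cyc_step (u v : word) : Prop :=
  exists u', cyc_conj u u' /\ rstep u' v.

Inductive cyc_star : word -> word -> Prop :=
| cyc_star_refl u : cyc_star u u
| cyc_star_step u v w : cyc_step u v -> cyc_star v w -> cyc_star u w.

Definition irreducible (u : word) : Prop := ~ exists v, rstep u v.

Definition cyc_irreducible (u : word) : Prop :=
  forall u', cyc_conj u u' -> irreducible u'.

Definition allseq_terminates (w : word) : Prop :=
  ~ exists f : nat -> word,
      cyc_conj w (f 0) /\ forall n, cyc_step (f n) (f n.+1).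

Definition occurs_in_allseq (w u : word) : Prop :=
  exists u1, cyc_conj w u1 /\ cyc_star u1 u.

Definition allseq_converges (w : word) : Prop :=
  exists v, occurs_in_allseq w v /\ cyc_irreducible v /\
    forall v', occurs_in_allseq w v' -> cyc_irreducible v' -> cyc_conj v v'.

Definition cyc_overlap (l1 r1 l2 r2 : word) : Prop :=
  exists x u y v, x <> [::] /\ u <> [::] /\ y <> [::] /\ v <> [::] /\
    l1 = x ++ u ++ y /\ l2 = y ++ v ++ x /\ ~ cyc_conj (r1 ++ v) (r2 ++ u).

Definition cyc_inclusion (l v l' v' : word) : Prop :=
  (cyc_conj l' l /\ ~ cyc_conj v v') \/
  (exists l1 u, cyc_conj l l1 /\ l1 = u ++ l' /\ u <> [::] /\
     ~ cyc_conj v (u ++ v')).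

Definition applicable (l z : word) : Prop := exists p q, z = p ++ l ++ q.

Definition applicable_cyc (l u : word) : Prop :=
  exists u', cyc_conj u u' /\ applicable l u'.

Definition no_cyc_overlap_inclusion (w : word) : Prop :=
  forall u, occurs_in_allseq w u ->
  forall l1 r1 l2 r2, R l1 r1 -> R l2 r2 ->
    applicable_cyc l1 u -> applicable_cyc l2 u ->
    ~ cyc_overlap l1 r1 l2 r2 /\ ~ cyc_inclusion l1 r1 l2 r2.

End Rewriting.

(* Main.v *)
Require Import Defs.
From Stdlib Require Import Classical ClassicalEpsilon.
From mathcomp Require Import all_boot.
Set Implicit Arguments. Unset Strict Implicit. Unset Printing Implicit Defensive.

Lemma catsplit (T : Type) (x y z w : seq T) :
  x ++ y = z ++ w -> size x <= size z -> exists m, z = x ++ m /\ y = m ++ w.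
Proof.
elim: x z => [|a x IH] [|b z] //=.
- by move=> ->; exists [::].
- by move=> ->; exists (b :: z).
- case=> -> E; rewrite ltnS => /(IH _ E) [m [-> ->]]; by exists m.
Qed.

Lemma conj_rot (T : Type) (u v : seq T) :
  cyc_conj u v <-> exists k, v = rot k u.
Proof.
split.
- by case=> a [b [-> ->]]; exists (size a); rewrite rot_size_cat.
- case=> k ->; exists (take k u), (drop k u); by rewrite cat_take_drop.
Qed.

Lemma conj_refl (T : Type) (u : seq T) : cyc_conj u u.
Proof. by apply/conj_rot; exists 0; rewrite rot0. Qed.

Lemma conj_size (T : Type) (u v : seq T) : cyc_conj u v -> size v = size u.
Proof. by case/conj_rot=> k ->; rewrite size_rot. Qed.

Lemma conj_sym (T : Type) (u v : seq T) : cyc_conj u v -> cyc_conj v u.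
Proof.
case/conj_rot=> k ->; apply/conj_rot; exists (size (rot k u) - k).
by rewrite -/(rotr k (rot k u)) rotK.
Qed.

Lemma conj_trans (T : Type) (u v x : seq T) :
  cyc_conj u v -> cyc_conj v x -> cyc_conj u x.
Proof.
case/conj_rot=> k ->; case/conj_rot=> j ->; apply/conj_rot.
rewrite (rot_minn k u) (rot_minn j) size_rot rot_add_mod ?geq_minr //.
by eexists.
Qed.

Lemma conj_cat (T : Type) (a b : seq T) : cyc_conj (a ++ b) (b ++ a).
Proof. by exists a, b. Qed.

Section Main.
End Main.

Lemma step_conj (T : Type) (R : rsystem T) u u' v :
  cyc_conj u u' -> cyc_step R u' v -> cyc_step R u v.
Proof.
move=> H [x [Hx Hs]]; exists x; split=> //; exact: conj_trans H Hx.
Qed.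

Lemma irr_conj (T : Type) (R : rsystem T) u v :
  cyc_irreducible R u -> cyc_conj u v -> cyc_irreducible R v.
Proof. move=> H Huv x Hx; apply: H; exact: conj_trans Huv Hx. Qed.

Lemma irr_nostep (T : Type) (R : rsystem T) u v :
  cyc_irreducible R u -> cyc_step R u v -> False.
Proof. move=> H [x [Hx Hs]]; apply: (H x Hx); by exists v. Qed.

Lemma notirr_step (T : Type) (R : rsystem T) u :
  ~ cyc_irreducible R u -> exists v, cyc_step R u v.
Proof.
move=> H; apply: NNPP => Hn; apply: H => x Hx [v Hv]; apply: Hn.
by exists v, x.
Qed.

Lemma rstep_cyc (T : Type) (R : rsystem T) u v : rstep R u v -> cyc_step R u v.
Proof. by move=> H; exists u; split=> //; exact: conj_refl. Qed.

Lemma rstar_cyc (T : Type) (R : rsystem T) u v : rstar R u v -> cyc_star R u v.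
Proof.
elim=> [x|x y z H _ IH]; first exact: cyc_star_refl.
exact: cyc_star_step (rstep_cyc H) IH.
Qed.

Lemma cyc_star_trans (T : Type) (R : rsystem T) u v x :
  cyc_star R u v -> cyc_star R v x -> cyc_star R u x.
Proof.
elim=> // a b c H _ IH Hc; exact: cyc_star_step H (IH Hc).
Qed.

Lemma conj_star (T : Type) (R : rsystem T) a x z :
  cyc_conj a x -> cyc_star R x z -> exists z', cyc_star R a z' /\ cyc_conj z' z.
Proof.
move=> Hax H; case: H Hax => [y|y b c Hs Hst] Hax.
- by exists a; split; [exact: cyc_star_refl|].
- exists c; split; last exact: conj_refl.
  exact: cyc_star_step (step_conj Hax Hs) Hst.
Qed.

Definition joinable (T : Type) (R : rsystem T) (a b : seq T) :=
  exists z1 z2, cyc_star R a z1 /\ cyc_star R b z2 /\ cyc_conj z1 z2.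

Lemma join_conj (T : Type) (R : rsystem T) a b : cyc_conj a b -> joinable R a b.
Proof. by move=> H; exists a, b; split; [exact: cyc_star_refl|split; [exact: cyc_star_refl|]]. Qed.

Lemma join_via (T : Type) (R : rsystem T) W x1 x2 y1 y2 :
  confluent R -> rstep R W x1 -> rstep R W x2 ->
  cyc_conj y1 x1 -> cyc_conj y2 x2 -> joinable R y1 y2.
Proof.
move=> Hc H1 H2 C1 C2.
have [z [Z1 Z2]] := Hc _ _ _ (rstar_step H1 (rstar_refl _ _)) (rstar_step H2 (rstar_refl _ _)).
have [z1 [S1 K1]] := conj_star C1 (rstar_cyc Z1).
have [z2 [S2 K2]] := conj_star C2 (rstar_cyc Z2).
exists z1, z2; do 2!split => //; exact: conj_trans K1 (conj_sym K2).
Qed.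

Lemma join_conj_l (T : Type) (R : rsystem T) a b a' b' :
  cyc_conj a a' -> cyc_conj b b' -> joinable R a' b' -> joinable R a b.
Proof.
move=> Ha Hb [z1 [z2 [S1 [S2 K]]]].
have [y1 [T1 L1]] := conj_star Ha S1.
have [y2 [T2 L2]] := conj_star Hb S2.
exists y1, y2; do 2!split => //.
exact: conj_trans L1 (conj_trans K (conj_sym L2)).
Qed.

Lemma rstep_mk (T : Type) (R : rsystem T) p l r q :
  R l r -> rstep R (p ++ l ++ q) (p ++ r ++ q).
Proof. by move=> H; exists p, l, r, q. Qed.

Lemma core (T : Type) (R : rsystem T) l1 r1 l2 r2 s t :
  confluent R -> R l1 r1 -> R l2 r2 ->
  ~ cyc_overlap l1 r1 l2 r2 -> ~ cyc_inclusion l1 r1 l2 r2 ->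
  ~ cyc_inclusion l2 r2 l1 r1 ->
  cyc_conj (l1 ++ s) (l2 ++ t) -> joinable R (r1 ++ s) (r2 ++ t).
Proof.
move=> Hc H1 H2 No N12 N21 [A [B [EW EW']]].
have EW2 := EW'.
case: (leqP (size l2) (size B)) => hB.
  have [m [EB Et]] := catsplit EW' hB.
  apply: (@join_via _ _ (A ++ l2 ++ m) (r1 ++ s) (A ++ r2 ++ m)) => //.
  - by rewrite -EB -EW; exact: (@rstep_mk _ _ [::]).
  - exact: rstep_mk.
  - exact: conj_refl.
  - by rewrite Et catA; exact: conj_cat.
have [m [El2 EA]] := catsplit (esym EW') (ltnW hB).
case: (leqP (size l1) (size A)) => hA.
  have [c [EA' Es]] := catsplit EW hA.
  apply: (@join_via _ _ (B ++ l1 ++ c) (B ++ r1 ++ c) (r2 ++ t)) => //.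
  - exact: rstep_mk.
  - by rewrite -EA' -EW'; exact: (@rstep_mk _ _ [::]).
  - by rewrite Es catA; exact: conj_cat.
  - exact: conj_refl.
have [e [El1 EB]] := catsplit (esym EW) (ltnW hA).
have mne : m <> [::].
  by move=> Em; move: hB; rewrite El2 Em cats0 ltnn.
have ene : e <> [::].
  by move=> Ee; move: hA; rewrite El1 Ee cats0 ltnn.
rewrite EA -catA in El1; rewrite EB -catA in El2.
case: (classic (s = [::])) => Hs; case: (classic (t = [::])) => Ht.
-
  subst s t; rewrite !cats0 in El1 El2 *.
  apply: join_conj; apply: NNPP => Hn; apply: N12; left; split => //.
  by rewrite El1 El2; exact: conj_cat.
- subst s; rewrite cats0 in El2 *.
  apply: (@join_conj_l _ _ _ _ r1 (t ++ r2)); [exact: conj_refl| exact: conj_cat|].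
  apply: join_conj; apply: NNPP => Hn; apply: N12; right.
  exists (t ++ l2), t; split; last by [].
  by rewrite El1 El2 /=; have := conj_cat m (t ++ e); rewrite -catA.
- subst t; rewrite cats0 in El1 *.
  apply: (@join_conj_l _ _ _ _ (s ++ r1) r2); [exact: conj_cat| exact: conj_refl|].
  apply: join_conj; apply: conj_sym; apply: NNPP => Hn; apply: N21; right.
  exists (s ++ l1), s; split; last by [].
  by rewrite El1 El2 /=; have := conj_cat e (s ++ m); rewrite -!catA.
- apply: join_conj; apply: NNPP => Hn; apply: No.
  exists m, t, e, s; do 4!split => //.
Qed.

Lemma norm_step (T : Type) (R : rsystem T) u a :
  cyc_step R u a -> exists l r s, R l r /\ cyc_conj u (l ++ s) /\
    cyc_conj a (r ++ s) /\ applicable_cyc l u.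
Proof.
case=> u' [Hu [p [l [r [q [HR [E1 E2]]]]]]].
exists l, r, (q ++ p); split => //; split.
  apply: conj_trans Hu _; rewrite E1 catA; have := conj_cat p (l ++ q).
  by rewrite -!catA.
split.
  rewrite E2; have := conj_cat p (r ++ q); by rewrite -!catA.
by exists u'; split => //; exists p, q.
Qed.

Lemma local_conf (T : Type) (R : rsystem T) w u a b :
  confluent R -> no_cyc_overlap_inclusion R w -> occurs_in_allseq R w u ->
  cyc_step R u a -> cyc_step R u b -> joinable R a b.
Proof.
move=> Hc Hno Hoc Ha Hb.
have [l1 [r1 [s [R1 [U1 [A1 P1]]]]]] := norm_step Ha.
have [l2 [r2 [t [R2 [U2 [A2 P2]]]]]] := norm_step Hb.
have [No1 Ni1] := Hno u Hoc _ _ _ _ R1 R2 P1 P2.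
have [_ Ni2] := Hno u Hoc _ _ _ _ R2 R1 P2 P1.
have K := conj_trans (conj_sym U1) U2.
have J := core Hc R1 R2 No1 Ni1 Ni2 K.
exact: (join_conj_l A1 A2 J).
Qed.

Definition rstepcyc (T : Type) (R : rsystem T) := fun y x => cyc_step R x y.

Lemma acc_star (T : Type) (R : rsystem T) x y :
  Acc (rstepcyc R) x -> cyc_star R x y -> Acc (rstepcyc R) y.
Proof.
move=> Hx H; elim: H Hx => [a|a b c Hs _ IH] Ha; first exact: Ha.
apply: IH; exact: (@Acc_inv _ (rstepcyc R) a Ha b Hs).
Qed.

Lemma nf_exists (T : Type) (R : rsystem T) u :
  Acc (rstepcyc R) u -> exists n, cyc_star R u n /\ cyc_irreducible R n.
Proof.
elim=> x _ IH; case: (classic (cyc_irreducible R x)) => Hx.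
  by exists x; split => //; exact: cyc_star_refl.
have [v Hv] := notirr_step Hx.
have [n [Hn Nn]] := IH v Hv; exists n; split => //; exact: cyc_star_step Hv Hn.
Qed.

Lemma star_inv (T : Type) (R : rsystem T) u v :
  cyc_star R u v -> v = u \/ exists a, cyc_step R u a /\ cyc_star R a v.
Proof. case=> [x|x a y S1 S2]; [by left|right; by exists a]. Qed.

Lemma newman (T : Type) (R : rsystem T) w :
  confluent R -> no_cyc_overlap_inclusion R w ->
  forall u, Acc (rstepcyc R) u -> cyc_star R w u ->
  forall v v', cyc_star R u v -> cyc_star R u v' ->
  cyc_irreducible R v -> cyc_irreducible R v' -> cyc_conj v v'.
Proof.
move=> Hc Hno u Hacc; elim: Hacc => {}u Hacc IH Hw v v' Hv Hv' Nv Nv'.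
case: (star_inv Hv) => [Ev|[a [Sa Sav]]].
  case: (star_inv Hv') => [Ev'|[b [Sb _]]]; first by rewrite Ev Ev'; exact: conj_refl.
  by rewrite Ev in Nv; case: (irr_nostep Nv Sb).
case: (star_inv Hv') => [Ev'|[b [Sb Sbv']]].
  by rewrite Ev' in Nv'; case: (irr_nostep Nv' Sa).
have Hoc : occurs_in_allseq R w u by exists w; split => //; exact: conj_refl.
have [z1 [z2 [Z1 [Z2 K]]]] := local_conf Hc Hno Hoc Sa Sb.
have Aa : Acc (rstepcyc R) a := Hacc a Sa.
have Ab : Acc (rstepcyc R) b := Hacc b Sb.
have [n [Zn Nn]] := nf_exists (acc_star Aa Z1).
have Wa : cyc_star R w a := cyc_star_trans Hw (cyc_star_step Sa (cyc_star_refl _ _)).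
have Wb : cyc_star R w b := cyc_star_trans Hw (cyc_star_step Sb (cyc_star_refl _ _)).
have C1 : cyc_conj v n := IH a Sa Wa _ _ Sav (cyc_star_trans Z1 Zn) Nv Nn.
have [n' [Zn' Kn']] := conj_star (conj_sym K) Zn.
have Nn' : cyc_irreducible R n' := irr_conj Nn (conj_sym Kn').
have C2 : cyc_conj v' n' := IH b Sb Wb _ _ Sbv' (cyc_star_trans Z2 Zn') Nv' Nn'.
exact: conj_trans C1 (conj_trans (conj_sym Kn') (conj_sym C2)).
Qed.

Lemma notacc_step (T : Type) (R : rsystem T) x :
  ~ Acc (rstepcyc R) x -> exists y, cyc_step R x y /\ ~ Acc (rstepcyc R) y.
Proof.
move=> H; apply: NNPP => Hn; apply: H; constructor => y Hy.
apply: NNPP => Hy'; apply: Hn; by exists y.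
Qed.

Lemma acc_w (T : Type) (R : rsystem T) w :
  allseq_terminates R w -> Acc (rstepcyc R) w.
Proof.
move=> Ht; apply: NNPP => Hw; apply: Ht.
pose S := {x : seq T | ~ Acc (rstepcyc R) x}.
have g : forall x : S, {y : S | cyc_step R (proj1_sig x) (proj1_sig y)}.
  move=> [x Hx] /=.
  have [y [Hy1 Hy2]] := constructive_indefinite_description _ (notacc_step Hx).
  by exists (exist _ y Hy2).
pose f n := proj1_sig (iter n (fun x => proj1_sig (g x)) (exist _ w Hw : S)).
exists f; split; first exact: conj_refl.
move=> n; rewrite /f iterS; exact: proj2_sig (g _).
Qed.

Theorem proposition5p7 (Sigma : Type) (R : rsystem Sigma) (w : seq Sigma) :
  complete R ->
  allseq_terminates R w ->
  no_cyc_overlap_inclusion R w ->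
  allseq_converges R w.
Proof.
move=> [_ Hc] Ht Hno.
have Aw := acc_w Ht.
have [n [Zn Nn]] := nf_exists Aw.
exists n; split; first by exists w; split => //; exact: conj_refl.
split => // v' [u1 [Hu1 Sv']] Nv'.
have [n' [Zn' Kn']] := conj_star Hu1 Sv'.
have Nn' := irr_conj Nv' (conj_sym Kn').
have := newman Hc Hno Aw (cyc_star_refl _ _) Zn Zn' Nn Nn'.
move=> C; exact: conj_trans C Kn'.
Qed.
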